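(* Let $1\le k\le r-1$, let $x\in\mathcal{K}_k(c,H)$, and let $q_{k-1}\in\mathbb{R}^n$ satisfy $q_{k-1} /\!/ \hat q_{k-1}$. Then the denominator $\hat g_k^T H\hat g_k\, q_{k-1}^T H q_{k-1}-(\hat g_k^T H q_{k-1})^2$ is nonzero and $$p^N_k(x)=p^N_{k-1}(x)+\beta_k\hat g_k+\gamma_{k-1}q_{k-1},$$ where $$\beta_k=-\frac{\hat g_k^T\hat g_k\; q_{k-1}^THq_{k-1}}{\hat g_k^TH\hat g_k\; q_{k-1}^THq_{k-1}-(\hat g_k^THq_{k-1})^2},\qquad \gamma_{k-1}=\frac{\hat g_k^T\hat g_k\; q_{k-1}^TH\hat g_k}{\hat g_k^TH\hat g_k\; q_{k-1}^THq_{k-1}-(\hat g_k^THq_{k-1})^2}.$$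
   Context: Let $H\in\mathbb{R}^{n\times n}$ be symmetric positive definite, $c\in\mathbb{R}^n$, $f(x)=\tfrac12 x^THx+c^Tx$ and $g(x)=Hx+c$ its gradient. For $k\ge 1$ let $\mathcal{K}_k(c,H)=\mathrm{span}\{c,Hc,\dots,H^{k-1}c\}$, and $\mathcal{K}_0(c,H)=\{0\}$. Assume $c\neq 0$ and let $r\ge1$ be the smallest integer with $\mathcal{K}_r(c,H)=\mathcal{K}_{r+1}(c,H)$. For $k\ge 0$ let $\hat x_k$ be the (unique) minimizer of $f$ over $\mathcal{K}_k(c,H)$, $\hat g_k=g(\hat x_k)$, and $\hat q_k=\hat x_{k+1}-\hat x_k$ (so $\hat x_r=-H^{-1}c$ and $\hat q_k\ne 0$ for $k\le r-1$). For $x\in\mathcal{K}_k(c,H)$, the $(k-1)$-th subspace Newton step is $p^N_{k-1}(x)=\hat x_k-x$; likewise $p^N_k(x)=\hat x_{k+1}-x$. Two vectors are parallel, $p /\!/ p'$, if both are nonzero and $p=tp'$ for some scalar $t\neq 0$. *)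

(* Defs.v *)
From mathcomp Require Import all_boot all_order all_algebra.
Set Implicit Arguments. Unset Strict Implicit. Unset Printing Implicit Defensive.
Import Order.TTheory GRing.Theory Num.Theory.
Local Open Scope ring_scope.

Section Defs.
Variables (R : realFieldType) (n : nat).

Definition dotv (u v : 'cV[R]_n) : R := (u^T *m v) 0 0.

Definition fobj (H : 'M[R]_n) (c x : 'cV[R]_n) : R :=
  2^-1 * dotv x (H *m x) + dotv c x.

Definition gradf (H : 'M[R]_n) (c x : 'cV[R]_n) : 'cV[R]_n := H *m x + c.

Definition krylov (H : 'M[R]_n) (c : 'cV[R]_n) (k : nat) (x : 'cV[R]_n) : Prop :=
  exists a : 'I_k -> R, x = \sum_(i < k) a i *: iter i (mulmx H) c.

Definition krylov_eq (H : 'M[R]_n) (c : 'cV[R]_n) (k m : nat) : Prop :=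
  forall x, krylov H c k x <-> krylov H c m x.

Definition krylov_r (H : 'M[R]_n) (c : 'cV[R]_n) (r : nat) : Prop :=
  [/\ (1 <= r)%N, krylov_eq H c r r.+1 &
      forall m, (1 <= m)%N -> (m < r)%N -> ~ krylov_eq H c m m.+1].

Definition krylov_min (H : 'M[R]_n) (c : 'cV[R]_n) (k : nat) (x : 'cV[R]_n) : Prop :=
  krylov H c k x /\ forall y, krylov H c k y -> fobj H c x <= fobj H c y.

Definition parallel (p p' : 'cV[R]_n) : Prop :=
  [/\ p != 0, p' != 0 & exists t : R, t != 0 /\ p = t *: p'].

End Defs.

(* Main.v *)
Require Import Defs.
From mathcomp Require Import all_boot all_order all_algebra.
From mathcomp Require Import ring lra zify.
Set Implicit Arguments. Unset Strict Implicit. Unset Printing Implicit Defensive.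
Import Order.TTheory GRing.Theory Num.Theory.
Local Open Scope ring_scope.

Lemma dotvE (R : realFieldType) n (u v : 'cV[R]_n) :
  dotv u v = \sum_i u i 0 * v i 0.
Proof. by rewrite /dotv mxE; apply: eq_bigr => i _; rewrite mxE. Qed.

Lemma dotvC (R : realFieldType) n (u v : 'cV[R]_n) : dotv u v = dotv v u.
Proof. by rewrite !dotvE; apply: eq_bigr => i _; rewrite mulrC. Qed.

Lemma dotvDl (R : realFieldType) n (u v w : 'cV[R]_n) :
  dotv (u + v) w = dotv u w + dotv v w.
Proof. by rewrite !dotvE -big_split; apply: eq_bigr => i _; rewrite mxE mulrDl. Qed.

Lemma dotvZl (R : realFieldType) n (a : R) (u w : 'cV[R]_n) :
  dotv (a *: u) w = a * dotv u w.
Proof. by rewrite !dotvE mulr_sumr; apply: eq_bigr => i _; rewrite mxE mulrA. Qed.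

Lemma dotvNl (R : realFieldType) n (u w : 'cV[R]_n) :
  dotv (- u) w = - dotv u w.
Proof. by rewrite -scaleN1r dotvZl mulN1r. Qed.

Lemma dotvBl (R : realFieldType) n (u v w : 'cV[R]_n) :
  dotv (u - v) w = dotv u w - dotv v w.
Proof. by rewrite dotvDl dotvNl. Qed.

Lemma dotvDr (R : realFieldType) n (u v w : 'cV[R]_n) :
  dotv w (u + v) = dotv w u + dotv w v.
Proof. by rewrite !(dotvC w) dotvDl. Qed.
Lemma dotvZr (R : realFieldType) n (a : R) (u w : 'cV[R]_n) :
  dotv w (a *: u) = a * dotv w u.
Proof. by rewrite !(dotvC w) dotvZl. Qed.
Lemma dotvBr (R : realFieldType) n (u v w : 'cV[R]_n) :
  dotv w (u - v) = dotv w u - dotv w v.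
Proof. by rewrite !(dotvC w) dotvBl. Qed.
Lemma dotv0r (R : realFieldType) n (w : 'cV[R]_n) : dotv w 0 = 0.
Proof. by rewrite dotvE big1 // => i _; rewrite mxE mulr0. Qed.

Lemma dotvHC (R : realFieldType) n (H : 'M[R]_n) (u v : 'cV[R]_n) :
  H^T = H -> dotv u (H *m v) = dotv (H *m u) v.
Proof. by move=> hs; rewrite /dotv trmx_mul hs mulmxA. Qed.

Lemma dotv_eq0 (R : realFieldType) n (v : 'cV[R]_n) : dotv v v = 0 -> v = 0.
Proof.
rewrite dotvE => h.
have h2 : forall i, true -> v i 0 * v i 0 = 0.
  by apply/psumr_eq0P => // k _; rewrite -expr2 sqr_ge0.
apply/matrixP => i j; rewrite (ord1 j) [RHS]mxE.
by have /eqP := h2 i isT; rewrite mulf_eq0 orbb => /eqP.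
Qed.

Definition Pw (R : realFieldType) n (H : 'M[R]_n) (c : 'cV[R]_n) (i : nat) :=
  iter i (mulmx H) c.

Definition kr (R : realFieldType) n (H : 'M[R]_n) (c : 'cV[R]_n) (k : nat) (x : 'cV[R]_n) :=
  exists a : nat -> R, x = \sum_(i < k) a i *: Pw H c i.

Lemma krylovP (R : realFieldType) n (H : 'M[R]_n) c k x :
  krylov H c k x <-> kr H c k x.
Proof.
split=> [[a ->]|[a ->]].
  exists (fun m => if insub m is Some i then a i else 0).
  by apply: eq_bigr => i _; rewrite valK.
by exists (fun i => a (val i)).
Qed.

Lemma kr_last (R : realFieldType) n (H : 'M[R]_n) c k v :
  kr H c k.+1 v -> exists u al, kr H c k u /\ v = u + al *: Pw H c k.
Proof.
case=> a ->; exists (\sum_(i < k) a i *: Pw H c i), (a k); split.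
  by exists a.
by rewrite big_ord_recr.
Qed.

Lemma kr_ext (R : realFieldType) n (H : 'M[R]_n) c k u al :
  kr H c k u -> kr H c k.+1 (u + al *: Pw H c k).
Proof.
case=> a ->; exists (fun m => if m == k then al else a m).
rewrite big_ord_recr /= eqxx; congr (_ + _).
by apply: eq_bigr => i _; rewrite /= (ltn_eqF (ltn_ord i)).
Qed.

Lemma kr0 (R : realFieldType) n (H : 'M[R]_n) c k : kr H c k 0.
Proof. by exists (fun _ => 0); rewrite big1 // => i _; rewrite scale0r. Qed.

Lemma krD (R : realFieldType) n (H : 'M[R]_n) c k u v :
  kr H c k u -> kr H c k v -> kr H c k (u + v).
Proof.
case=> a -> [b ->]; exists (fun m => a m + b m).
by rewrite -big_split; apply: eq_bigr => i _; rewrite scalerDl.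
Qed.

Lemma krZ (R : realFieldType) n (H : 'M[R]_n) c k t u :
  kr H c k u -> kr H c k (t *: u).
Proof.
case=> a ->; exists (fun m => t * a m).
by rewrite scaler_sumr; apply: eq_bigr => i _; rewrite scalerA.
Qed.

Lemma krB (R : realFieldType) n (H : 'M[R]_n) c k u v :
  kr H c k u -> kr H c k v -> kr H c k (u - v).
Proof. by move=> hu hv; apply: krD => //; rewrite -scaleN1r; apply: krZ. Qed.

Lemma kr_mono (R : realFieldType) n (H : 'M[R]_n) c k u :
  kr H c k u -> kr H c k.+1 u.
Proof. by move=> h; have := kr_ext 0 h; rewrite scale0r addr0. Qed.

Lemma kr_monoL (R : realFieldType) n (H : 'M[R]_n) c i j u :
  (i <= j)%N -> kr H c i u -> kr H c j u.
Proof.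
move=> /subnK <-; elim: (j - i)%N => [|m ih] h //.
by rewrite addSn; apply: kr_mono; apply: ih.
Qed.

Lemma kr_P (R : realFieldType) n (H : 'M[R]_n) c i k :
  (i < k)%N -> kr H c k (Pw H c i).
Proof.
move=> lt; apply: (kr_monoL lt).
by have := kr_ext 1 (kr0 H c i); rewrite add0r scale1r.
Qed.

Lemma kr_H (R : realFieldType) n (H : 'M[R]_n) c k v :
  kr H c k v -> kr H c k.+1 (H *m v).
Proof.
case=> a ->; exists (fun m => if m is m'.+1 then a m' else 0).
rewrite big_ord_recl /= scale0r add0r mulmx_sumr.
by apply: eq_bigr => i _; rewrite /= scalemxAr.
Qed.

Lemma fobj_add (R : realFieldType) n (H : 'M[R]_n) c x v t :
  H^T = H ->
  fobj H c (x + t *: v) = fobj H c x + t * dotv (gradf H c x) v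
     + t ^+ 2 / 2 * dotv v (H *m v).
Proof.
move=> hs; rewrite /fobj /gradf mulmxDr -scalemxAr !dotvDl !dotvDr !dotvZl !dotvZr.
rewrite -(dotvHC _ _ hs) (dotvHC v x hs) (dotvC (H *m v)).
have h2 : (2 : R) != 0 by rewrite pnatr_eq0.
by field.
Qed.

Lemma min_orth (R : realFieldType) n (H : 'M[R]_n) c k x v :
  H^T = H ->
  (forall v : 'cV[R]_n, v != 0 -> 0 < dotv v (H *m v)) ->
  krylov_min H c k x -> kr H c k v -> dotv (gradf H c x) v = 0.
Proof.
move=> hs hpd [hx hmin] hv.
have [->|v0] := eqVneq v 0; first by rewrite dotv0r.
have hB := hpd _ v0.
set s := dotv (gradf H c x) v; set B := dotv v (H *m v).
apply/eqP; apply/negPn/negP => s0.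
have hk : krylov H c k (x + (- s / B) *: v).
  apply/krylovP; apply: krD; first by apply/krylovP.
  by apply: krZ.
have := hmin _ hk; rewrite fobj_add // -/s -/B.
have -> : fobj H c x + - s / B * s + (- s / B) ^+ 2 / 2 * B
   = fobj H c x - s ^+ 2 / (2 * B).
  by field; rewrite gt_eqF.
have hp : 0 < s ^+ 2 / (2 * B).
  have hs2 : 0 < s ^+ 2 by rewrite lt0r sqr_ge0 andbT sqrf_eq0.
  by rewrite divr_gt0 // mulr_gt0.
move=> h; have : fobj H c x - s ^+ 2 / (2 * B) < fobj H c x by rewrite ltrBlDr ltrDl.
by rewrite ltNge h.
Qed.

Lemma solveP (R : realFieldType) n (u p q : 'cV[R]_n) a :
  a != 0 -> q = u + a *: p -> p = a^-1 *: (q - u).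
Proof. by move=> a0 ->; rewrite addrC addKr scalerA mulVf // scale1r. Qed.

Lemma kr_eq0 (R : realFieldType) n (H : 'M[R]_n) c v : kr H c 0 v -> v = 0.
Proof. by case=> a ->; rewrite big_ord0. Qed.

Lemma PwS (R : realFieldType) n (H : 'M[R]_n) c j :
  Pw H c j.+1 = H *m Pw H c j.
Proof. by []. Qed.

Lemma gaux (R : realFieldType) n (H : 'M[R]_n) c j v :
  c != 0 -> kr H c j v -> c + H *m v = 0 ->
  exists d, [/\ (1 <= d)%N, (d <= j)%N & kr H c d (Pw H c d)].
Proof.
move=> c0; elim: j v => [|j ih] v.
  by move=> /kr_eq0 ->; rewrite mulmx0 addr0 => e; rewrite e eqxx in c0.
move=> /kr_last [u [al [hu ->]]] e.
have [al0|al0] := eqVneq al 0.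
  move: e; rewrite al0 scale0r addr0 => /(ih _ hu) [d [d1 d2 hd]].
  by exists d; split => //; apply: leqW.
exists j.+1; split => //.
have e2 : 0 = (c + H *m u) + al *: Pw H c j.+1.
  by rewrite -e mulmxDr -scalemxAr addrA.
have -> := solveP al0 e2.
apply: krZ; apply: krB; first exact: kr0.
apply: krD; last exact: kr_H.
by have := @kr_P _ _ H c 0 j.+1 isT.
Qed.

Lemma kreq (R : realFieldType) n (H : 'M[R]_n) c d :
  kr H c d (Pw H c d) -> krylov_eq H c d d.+1.
Proof.
move=> hd x; rewrite !krylovP; split; first exact: kr_mono.
by move=> /kr_last [u [al [hu ->]]]; apply: krD => //; apply: krZ.
Qed.

Lemma cramer1 (F : fieldType) (G A B C : F) : A * B - C ^+ 2 != 0 ->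
  G + (- (G * B) / (A * B - C ^+ 2)) * A + (G * C / (A * B - C ^+ 2)) * C = 0.
Proof. by move=> h; field. Qed.

Theorem mainTheorem1 (R : realFieldType) (n : nat) (H : 'M[R]_n) (c : 'cV[R]_n)
  (r k : nat) (x xkm1 xk xk1 q : 'cV[R]_n) :
  H^T = H ->
  (forall v : 'cV[R]_n, v != 0 -> 0 < dotv v (H *m v)) ->
  c != 0 ->
  krylov_r H c r ->
  (1 <= k)%N -> (k <= r - 1)%N ->
  krylov_min H c k.-1 xkm1 ->
  krylov_min H c k xk ->
  krylov_min H c k.+1 xk1 ->
  krylov H c k x ->
  parallel q (xk - xkm1) ->
  let g := gradf H c xk in
  let D := dotv g (H *m g) * dotv q (H *m q) - (dotv g (H *m q)) ^+ 2 in
  let beta := - (dotv g g * dotv q (H *m q)) / D in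
  let gamma := (dotv g g * dotv q (H *m g)) / D in
  D != 0 /\ xk1 - x = (xk - x) + beta *: g + gamma *: q.
Proof.
move=> hs hpd c0 [r1 req rmin] k1 kr1 hm0 hm1 hm2 hx [q0 d0 [t [t0 qe]]].
case: k k1 kr1 hm0 hm1 hm2 hx => [|k] k1; first by rewrite ltn0 in k1. move=> kr1 hm0 hm1 hm2 hx g D beta gamma.
have O0 := fun v => @min_orth _ _ H c k xkm1 v hs hpd hm0.
have O1 : forall v, kr H c k.+1 v -> dotv g v = 0 := fun v => @min_orth _ _ H c k.+1 xk v hs hpd hm1.
have O2 := fun v => @min_orth _ _ H c k.+2 xk1 v hs hpd hm2.
have [kxm1 _] := hm0; have [kxk _] := hm1; have [kxk1 _] := hm2.
move: kxm1 kxk kxk1 => /krylovP kxm1 /krylovP kxk /krylovP kxk1.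
set g0 := gradf H c xkm1 in O0.
have hq : kr H c k.+1 q by rewrite qe; apply: krZ; apply: krB => //; apply: kr_mono.
have Hq : H *m q = t *: (g - g0).
  rewrite qe -scalemxAr mulmxBr; congr (_ *: _); apply/matrixP => i j.
  by rewrite /g /g0 /gradf !mxE; ring.
have HqK : forall v, kr H c k v -> dotv (H *m q) v = 0.
  move=> v hv; rewrite Hq dotvZl dotvBl O0 // O1 ?subr0 ?mulr0 //.
  exact: kr_mono.
have HgK : forall v, kr H c k v -> dotv (H *m g) v = 0.
  by move=> v hv; rewrite -dotvHC // O1 //; apply: kr_H.
have g0n : g != 0.
  apply/eqP => ge.
  have e : c + H *m xk = 0 by rewrite addrC.
  have [d [d1 d2 hd]] := gaux c0 kxk e.
  apply: (rmin d d1); last exact: kreq.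
  lia.
have gg0 : dotv g g != 0 by apply/eqP => /dotv_eq0; apply/eqP.
set A := dotv g (H *m g); set B := dotv q (H *m q); set C := dotv g (H *m q).
have CC : dotv q (H *m g) = C by rewrite dotvHC // dotvC.
have Bp : 0 < B by apply: hpd.
have gq : dotv g q = 0 by apply: O1.
have Dn : D != 0.
  apply/eqP => De.
  pose w := C *: q - B *: g.
  have w0 : w = 0.
    apply/eqP; apply/negPn/negP => /hpd; rewrite /w mulmxBr -!scalemxAr.
    rewrite !dotvBl !dotvBr !dotvZl !dotvZr -/A -/B -/C CC.
    have -> : C * (C * B) - C * (B * C) - (B * (C * C) - B * (B * A)) = B * D.
      by rewrite /D -/A -/B -/C; ring.
    by rewrite De mulr0 ltxx.
  have : dotv g w = 0 by rewrite w0 dotv0r.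
  rewrite /w dotvBr !dotvZr gq mulr0 sub0r => /eqP.
  by rewrite oppr_eq0 mulf_eq0 (gt_eqF Bp) (negbTE gg0).
split => //.
have [uq [aq [huq eq]]] := kr_last hq.
have aq0 : aq != 0.
  apply/eqP => a0; move: eq; rewrite a0 scale0r addr0 => eq.
  have := hpd _ q0; rewrite dotvC HqK ?ltxx //.
  by rewrite eq.
have [ux [ax [hux exk]]] := kr_last kxk.
set w1 := H *m ux + c.
have hw1 : kr H c k.+1 w1.
  apply: krD; first exact: kr_H.
  by have := @kr_P _ _ H c 0 k.+1 isT.
have eg : g = w1 + ax *: Pw H c k.+1.
  rewrite /g /gradf exk mulmxDr -scalemxAr /w1 -PwS.
  by rewrite addrAC.
have ax0 : ax != 0.
  apply/eqP => a0; move: eg; rewrite a0 scale0r addr0 => eg.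
  have h := O1 w1 hw1; rewrite -/g in h.
  by move: gg0; rewrite {2}eg h eqxx.
set gy := g + beta *: (H *m g) + gamma *: (H *m q).
have Y0 : forall v, kr H c k v -> dotv gy v = 0.
  move=> v hv; rewrite /gy 2!dotvDl !dotvZl HgK // HqK // O1 ?mulr0 ?addr0 //.
  exact: kr_mono.
have Yq : dotv gy q = 0.
  rewrite /gy 2!dotvDl !dotvZl gq -dotvHC // -/C (dotvC (H *m q)) -/B.
  rewrite /beta /gamma CC -/B; ring.
have Yg : dotv gy g = 0.
  rewrite /gy 2!dotvDl !dotvZl -(dotvHC _ _ hs) -/A (dotvC (H *m q)) -/C.
  rewrite /beta /gamma CC /D -/A -/B -/C.
  by apply: cramer1; exact: Dn.
have YK : forall v, kr H c k.+1 v -> dotv gy v = 0.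
  move=> v /kr_last [u [a [hu ->]]].
  rewrite (solveP aq0 eq) dotvDr !dotvZr dotvBr Yq Y0 // Y0 //.
  by rewrite subr0 !mulr0 addr0.
have YK2 : forall v, kr H c k.+2 v -> dotv gy v = 0.
  move=> v /kr_last [u [a [hu ->]]].
  rewrite (solveP ax0 eg) dotvDr !dotvZr dotvBr Yg YK // YK //.
  by rewrite subr0 !mulr0 addr0.
set y := xk + beta *: g + gamma *: q.
have hy : kr H c k.+2 y.
  apply: krD; first apply: krD.
  - exact: kr_mono.
  - by apply: krZ; rewrite eg; apply: kr_ext.
  - by apply: krZ; apply: kr_mono.
have Hd : H *m (xk1 - y) = gradf H c xk1 - gy.
  rewrite /gy /y mulmxBr 2!mulmxDr -!scalemxAr {1}/g /gradf.
  apply/matrixP => i j; rewrite !mxE.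
  ring.
have dy : xk1 - y = 0.
  apply/eqP; apply/negPn/negP => /hpd; rewrite Hd dotvBr.
  rewrite (dotvC _ (gradf _ _ _)) (dotvC _ gy) O2 ?YK2 ?subr0 ?ltxx //.
  exact: (krB kxk1 hy). exact: (krB kxk1 hy).
have -> : xk1 = y by apply/eqP; rewrite -subr_eq0 dy.
apply/matrixP => i j; rewrite /y !mxE; ring.
Qed.
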